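(* Any function $K\in\mathfrak C_{cl}(\gamma_j)$ that vanishes on $\gamma_j$ can be written, in a neighbourhood of $\gamma_j$, $$K(x,\xi,y,\eta)=K(\xi,y,\eta)=a(\xi-c_o)+b\,y\eta$$ for some smooth functions $a,b\in\mathfrak C_{cl}(\gamma_j)$.
   Context: Let $\sigma$ be either $\sigma(x,y)=(x+2\pi,y)$ (direct case) or $\sigma(x,y)=(x+\pi,-y)$ (reverse case) acting on $\mathbb R^2$, and consider the cotangent bundle $T^*(\mathbb R^2/\sigma)$ with canonical coordinates $(x,y,\xi,\eta)$ (functions on it are functions on $T^*\mathbb R^2$ invariant under the cotangent lift of $\sigma$). Fix $c_o\in\mathbb R$ and let $\gamma_j=((\mathbb R\times\{0\})/\sigma)\times\{c_o\}\times\{0\}$, i.e. the circle $\{y=0,\ \xi=c_o,\ \eta=0\}$. The classical commutant is $\mathfrak C_{cl}(\gamma_j)=\{f\in C^\infty(T^*(\mathbb R^2/\sigma)) : \{f,\xi\}=\{f,y\eta\}=0 \text{ near }\gamma_j\}$, where $\{\cdot,\cdot\}$ is the Poisson bracket. *)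

(* Defs.v *)
From Stdlib Require Import Reals.
From Coquelicot Require Import Coquelicot.
Open Scope R_scope.

(* Functions on T*R^2 in canonical coordinates (x, y, xi, eta), curried in
   this order: f x y xi eta. *)
Definition F4 := R -> R -> R -> R -> R.

Definition dx (f : F4) : F4 := fun x y u v => Derive (fun t => f t y u v) x.
Definition dy (f : F4) : F4 := fun x y u v => Derive (fun t => f x t u v) y.
Definition dxi (f : F4) : F4 := fun x y u v => Derive (fun t => f x y t v) u.
Definition deta (f : F4) : F4 := fun x y u v => Derive (fun t => f x y u t) v.

Definition has_partials (f : F4) : Prop :=
  forall x y u v,
    ex_derive (fun t => f t y u v) x /\ ex_derive (fun t => f x t u v) y /\
    ex_derive (fun t => f x y t v) u /\ ex_derive (fun t => f x y u t) v.

Definition cont4 (f : F4) : Prop :=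
  forall x y u v eps, 0 < eps -> exists d, 0 < d /\
    forall x' y' u' v', Rabs (x' - x) < d -> Rabs (y' - y) < d ->
      Rabs (u' - u) < d -> Rabs (v' - v) < d ->
      Rabs (f x' y' u' v' - f x y u v) < eps.

Fixpoint Ck (k : nat) (f : F4) : Prop :=
  match k with
  | O => cont4 f
  | S k => cont4 f /\ has_partials f /\
           Ck k (dx f) /\ Ck k (dy f) /\ Ck k (dxi f) /\ Ck k (deta f)
  end.

Definition smooth (f : F4) : Prop := forall k, Ck k f.

(* Poisson bracket for the canonical symplectic form dxi/\dx + deta/\dy *)
Definition poisson (f g : F4) : F4 := fun x y u v =>
  dxi f x y u v * dx g x y u v - dx f x y u v * dxi g x y u v
  + deta f x y u v * dy g x y u v - dy f x y u v * deta g x y u v.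

Definition xi_fun : F4 := fun _ _ u _ => u.
Definition yeta_fun : F4 := fun _ y _ v => y * v.

Inductive sigma_case := Direct | Reverse.

(* Invariance under the cotangent lift of sigma:
   Direct : (x,y,xi,eta) |-> (x+2pi, y, xi, eta)
   Reverse: (x,y,xi,eta) |-> (x+pi, -y, xi, -eta) *)
Definition sigma_invariant (s : sigma_case) (f : F4) : Prop :=
  match s with
  | Direct => forall x y u v, f (x + 2 * PI) y u v = f x y u v
  | Reverse => forall x y u v, f (x + PI) (- y) u (- v) = f x y u v
  end.

(* smooth functions on T*(R^2/sigma) *)
Definition Cinf_quot (s : sigma_case) (f : F4) : Prop :=
  smooth f /\ sigma_invariant s f.

Definition open4 (U : R -> R -> R -> R -> Prop) : Prop :=
  forall x y u v, U x y u v -> exists d, 0 < d /\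
    forall x' y' u' v', Rabs (x' - x) < d -> Rabs (y' - y) < d ->
      Rabs (u' - u) < d -> Rabs (v' - v) < d -> U x' y' u' v'.

(* P holds in a neighbourhood of (the preimage in T*R^2 of)
   gamma_j = {y = 0, xi = c, eta = 0}. *)
Definition near_gamma (c : R) (P : R -> R -> R -> R -> Prop) : Prop :=
  exists U, open4 U /\ (forall x, U x 0 c 0) /\
    forall x y u v, U x y u v -> P x y u v.

Definition Ccl (s : sigma_case) (c : R) (f : F4) : Prop :=
  Cinf_quot s f /\
  near_gamma c (fun x y u v =>
    poisson f xi_fun x y u v = 0 /\ poisson f yeta_fun x y u v = 0).

(* Main.v *)
Require Import Defs.
From Stdlib Require Import Reals Lra.
From Coquelicot Require Import Coquelicot.
From Stdlib Require Import Classical FunctionalExtensionality IndefiniteDescription.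
Open Scope R_scope.

Definition U4 (f : F4) (p : R * R * R * R) : R :=
  f (fst (fst (fst p))) (snd (fst (fst p))) (snd (fst p)) (snd p).

Lemma cont4_continuous f : cont4 f -> forall p, continuous (U4 f) p.
Proof.
  intros H [[[x y] u] v].
  apply filterlim_locally; intro eps.
  destruct (H x y u v eps (cond_pos eps)) as [d [Hd H']].
  exists (mkposreal d Hd); intros [[[x' y'] u'] v'] [[[H1 H2] H3] H4].
  apply H'; assumption.
Qed.

Lemma continuous_cont4 f : (forall p, continuous (U4 f) p) -> cont4 f.
Proof.
  intros H x y u v eps Heps.
  specialize (H (x,y,u,v)).
  destruct (proj1 (filterlim_locally _ _) H (mkposreal eps Heps)) as [d Hd].
  exists d; split; [apply cond_pos|].
  intros x' y' u' v' H1 H2 H3 H4.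
  apply (Hd (x',y',u',v')). repeat split; assumption.
Qed.

Lemma cont_pair {T U V : UniformSpace} (f : T -> U) (g : T -> V) x :
  continuous f x -> continuous g x -> continuous (fun z => (f z, g z)) x.
Proof.
  intros Hf Hg. apply filterlim_locally; intro eps.
  generalize (filter_and _ _ (proj1 (filterlim_locally _ _) Hf eps)
     (proj1 (filterlim_locally _ _) Hg eps)). apply filter_imp.
  intros z [H1 H2]; split; assumption.
Qed.

Lemma cfst {U V : UniformSpace} (p : U * V) : continuous fst p.
Proof. destruct p; apply continuous_fst. Qed.
Lemma csnd {U V : UniformSpace} (p : U * V) : continuous snd p.
Proof. destruct p; apply continuous_snd. Qed.

Lemma cmul {U : UniformSpace} (f g : U -> R) x :
  continuous f x -> continuous g x -> continuous (fun z => f z * g z) x.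
Proof. intros; exact (continuous_mult f g x H H0). Qed.
Lemma cadd {U : UniformSpace} (f g : U -> R) x :
  continuous f x -> continuous g x -> continuous (fun z => f z + g z) x.
Proof. intros; exact (@continuous_plus U R_AbsRing R_NormedModule f g x H H0). Qed.
Lemma cconst {U : UniformSpace} (c : R) (x : U) : continuous (fun _ => c) x.
Proof. apply continuous_const. Qed.

Lemma ccomp4 {U : UniformSpace} (F : F4) (a b c d : U -> R) p :
  cont4 F -> continuous a p -> continuous b p -> continuous c p -> continuous d p ->
  continuous (fun z => F (a z) (b z) (c z) (d z)) p.
Proof.
  intros HF Ha Hb Hc Hd.
  apply (continuous_comp (fun z => (a z, b z, c z, d z)) (U4 F)).
  - repeat apply cont_pair; assumption.
  - apply cont4_continuous; assumption.
Qed.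

Lemma ccompR {U : UniformSpace} (w : R -> R) (a : U -> R) p :
  (forall t, continuous w t) -> continuous a p -> continuous (fun z => w (a z)) p.
Proof. intros Hw Ha. apply (continuous_comp a w). exact Ha. apply Hw. Qed.

Lemma abs_sub_lt a b e1 e2 : Rabs a < e1 -> Rabs b < e2 -> Rabs (a - b) < e1 + e2.
Proof.
  intros H H0. destruct (Rabs_def2 _ _ H), (Rabs_def2 _ _ H0). apply Rabs_def1; lra.
Qed.

Definition famg (w my ny mu nu mv nv : R -> R) (f : F4) : R -> F4 :=
  fun t x y u v => w t * f x (my t * y + ny t) (mu t * u + nu t) (mv t * v + nv t).
Definition RI (g : R -> F4) : F4 := fun x y u v => RInt (fun t => g t x y u v) 0 1.
Definition ctn (w : R -> R) := forall t, continuous w t.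

Lemma famg_cont w my ny mu nu mv nv f {U : UniformSpace} (T X Y Z V : U -> R) p :
  cont4 f -> ctn w -> ctn my -> ctn ny -> ctn mu -> ctn nu -> ctn mv -> ctn nv ->
  continuous T p -> continuous X p -> continuous Y p -> continuous Z p -> continuous V p ->
  continuous (fun z => famg w my ny mu nu mv nv f (T z) (X z) (Y z) (Z z) (V z)) p.
Proof.
  intros. unfold famg.
  apply cmul; [apply ccompR; auto|].
  apply ccomp4; auto; apply cadd; try apply cmul; try apply ccompR; auto.
Qed.

Lemma ccomp_fst {U V W : UniformSpace} (h : U -> V * W) p :
  continuous h p -> continuous (fun z => fst (h z)) p.
Proof. intros H. apply (continuous_comp h fst). exact H. apply cfst. Qed.
Lemma ccomp_snd {U V W : UniformSpace} (h : U -> V * W) p :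
  continuous h p -> continuous (fun z => snd (h z)) p.
Proof. intros H. apply (continuous_comp h snd). exact H. apply csnd. Qed.
Ltac cproj := repeat (first [apply ccomp_fst | apply ccomp_snd]); apply continuous_id.

Definition G5 (g : R -> F4) (q : R * (R * R * R * R)) : R :=
  g (fst q) (fst (fst (fst (snd q)))) (snd (fst (fst (snd q)))) (snd (fst (snd q))) (snd (snd q)).

Lemma cont_t (g : R -> F4) :
  (forall q, continuous (G5 g) q) -> forall x y u v t, continuous (fun t => g t x y u v) t.
Proof.
  intros Hg x y u v t.
  exact (continuous_comp (fun t => (t,(x,y,u,v))) (G5 g) t
    (cont_pair _ _ _ (continuous_id t) (continuous_const _ t)) (Hg _)).
Qed.

Lemma int_cont (g : R -> F4) :
  (forall q, continuous (G5 g) q) -> cont4 (RI g).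
Proof.
  intros Hg x y u v eps Heps.
  assert (Hd : forall t, exists d : posreal, forall q, ball (t,(x,y,u,v)) d q ->
     Rabs (G5 g q - g t x y u v) < eps/4).
  { intro t. assert (He : 0 < eps/4) by lra.
    destruct (proj1 (filterlim_locally _ _) (Hg (t,(x,y,u,v))) (mkposreal _ He)) as [d Hd].
    exists d. intros q Hq. exact (Hd q Hq). }
  set (del := fun t => proj1_sig (constructive_indefinite_description _ (Hd t))).
  assert (Hdel : forall t q, ball (t,(x,y,u,v)) (del t) q -> Rabs (G5 g q - g t x y u v) < eps/4).
  { intro t. unfold del. destruct (constructive_indefinite_description _ (Hd t)); auto. }
  destruct (compactness_value_1d 0 1 del) as [d Hcomp].
  exists d; split; [apply cond_pos|].
  intros x' y' u' v' H1 H2 H3 H4.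
  assert (Hpt : forall t, 0 <= t <= 1 -> Rabs (g t x' y' u' v' - g t x y u v) < eps/2).
  { intros t Ht. apply NNPP; intro Hn. apply (Hcomp t Ht).
    intros [t0 [Ht0 [Htt Hdt]]]. apply Hn.
    assert (A1 := Hdel t0 (t,(x',y',u',v'))).
    assert (A2 := Hdel t0 (t,(x,y,u,v))).
    unfold G5 in A1, A2; simpl in A1, A2.
    assert (B1 : Rabs (g t x' y' u' v' - g t0 x y u v) < eps/4).
    { apply A1. split; [|repeat split].
      - change (Rabs (t - t0) < del t0). lra.
      - change (Rabs (x' - x) < del t0); lra.
      - change (Rabs (y' - y) < del t0); lra.
      - change (Rabs (u' - u) < del t0); lra.
      - change (Rabs (v' - v) < del t0); lra. }
    assert (B2 : Rabs (g t x y u v - g t0 x y u v) < eps/4).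
    { apply A2. split; [|repeat split].
      - change (Rabs (t - t0) < del t0). lra.
      - change (Rabs (x - x) < del t0); rewrite Rminus_eq_0, Rabs_R0; apply cond_pos.
      - change (Rabs (y - y) < del t0); rewrite Rminus_eq_0, Rabs_R0; apply cond_pos.
      - change (Rabs (u - u) < del t0); rewrite Rminus_eq_0, Rabs_R0; apply cond_pos.
      - change (Rabs (v - v) < del t0); rewrite Rminus_eq_0, Rabs_R0; apply cond_pos. }
    replace (g t x' y' u' v' - g t x y u v) with
      ((g t x' y' u' v' - g t0 x y u v) - (g t x y u v - g t0 x y u v)) by ring.
    replace (eps/2) with (eps/4 + eps/4) by field. apply abs_sub_lt; assumption. }
  assert (Hc : forall x y u v, ex_RInt (fun t => g t x y u v) 0 1).
  { intros. apply (@ex_RInt_continuous R_CompleteNormedModule). intros; apply cont_t; auto. }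
  unfold RI.
  assert (E : RInt (fun t => g t x' y' u' v') 0 1 - RInt (fun t => g t x y u v) 0 1
     = RInt (fun t => g t x' y' u' v' - g t x y u v) 0 1).
  { symmetry. exact (RInt_minus _ _ 0 1 (Hc _ _ _ _) (Hc _ _ _ _)). }
  rewrite E. eapply Rle_lt_trans.
  - apply abs_RInt_le_const with (M := eps/2). lra.
    exact (ex_RInt_minus _ _ 0 1 (Hc _ _ _ _) (Hc _ _ _ _)).
    intros; left; apply Hpt; auto.
  - lra.
Qed.

Lemma dparam (G G' : R -> R -> R) z0 :
  (forall z t, is_derive (fun z => G z t) z (G' z t)) ->
  (forall z t, continuous (fun p : R*R => G' (fst p) (snd p)) (z,t)) ->
  (forall z t, continuous (G z) t) ->
  is_derive (fun z => RInt (G z) 0 1) z0 (RInt (G' z0) 0 1).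
Proof.
  intros HD HC HT.
  assert (E : (fun u v => Derive (fun z => G z v) u) = G').
  { apply functional_extensionality; intro u; apply functional_extensionality; intro v.
    apply is_derive_unique. apply HD. }
  replace (RInt (G' z0) 0 1) with (RInt (fun t => Derive (fun u => G u t) z0) 0 1).
  2:{ apply RInt_ext. intros. apply is_derive_unique. apply HD. }
  apply (is_derive_RInt_param G 0 1 z0).
  - apply filter_forall. intros. eexists. apply HD.
  - intros. rewrite E. apply continuity_2d_pt_filterlim. apply HC.
  - apply filter_forall. intros. apply (@ex_RInt_continuous R_CompleteNormedModule).
    intros; apply HT.
Qed.

Lemma isd_eq (f : R -> R) x l l' : is_derive f x l -> l = l' -> is_derive f x l'.
Proof. intros H <-; exact H. Qed.
Lemma is_derive_lin a b z : is_derive (fun z => a*z+b) z a.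
Proof.
  eapply isd_eq.
  exact (is_derive_plus (fun z => a * z) (fun _ => b) z _ _ (is_derive_scal _ z a _ (is_derive_id z)) (is_derive_const b z)).
  change (a * 1 + 0 = a). ring.
Qed.
Lemma is_derive_aff (F : R -> R) a b w z D :
  is_derive F (a*z+b) D -> is_derive (fun z => w * F (a*z+b)) z (w * a * D).
Proof.
  intros H.
  generalize (is_derive_scal _ _ w _ (is_derive_comp F (fun z => a*z+b) z D a H (is_derive_lin a b z))).
  intro H3. eapply isd_eq. exact H3. change (w * (a * D) = w * a * D). ring.
Qed.

Lemma has_partials_dx f x y u v : has_partials f -> is_derive (fun t => f t y u v) x (dx f x y u v).
Proof. intros H. apply Derive_correct. destruct (H x y u v) as [A _]. exact A. Qed.
Lemma has_partials_dy f x y u v : has_partials f -> is_derive (fun t => f x t u v) y (dy f x y u v).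
Proof. intros H. apply Derive_correct. destruct (H x y u v) as [_ [A _]]. exact A. Qed.
Lemma has_partials_dxi f x y u v : has_partials f -> is_derive (fun t => f x y t v) u (dxi f x y u v).
Proof. intros H. apply Derive_correct. destruct (H x y u v) as [_ [_ [A _]]]. exact A. Qed.
Lemma has_partials_deta f x y u v : has_partials f -> is_derive (fun t => f x y u t) v (deta f x y u v).
Proof. intros H. apply Derive_correct. destruct (H x y u v) as [_ [_ [_ A]]]. exact A. Qed.


Section FamDeriv.
Variables (w my ny mu nu mv nv : R -> R) (f : F4).
Hypotheses (Hw : ctn w) (Hmy : ctn my) (Hny : ctn ny) (Hmu : ctn mu) (Hnu : ctn nu)
  (Hmv : ctn mv) (Hnv : ctn nv) (Hf : cont4 f) (Hp : has_partials f).

Lemma famg_G5 f' : cont4 f' -> forall q, continuous (G5 (famg w my ny mu nu mv nv f')) q.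
Proof.
  intros Hf' q. unfold G5. apply famg_cont; auto; cproj.
Qed.


Lemma RI_dx (x y u v : R) : cont4 (dx f) ->
  is_derive (fun z => RI (famg w my ny mu nu mv nv f) z y u v) x
    (RI (famg w my ny mu nu mv nv (dx f)) x y u v).
Proof.
  intros Hd. unfold RI.
  apply (dparam (fun z t => famg w my ny mu nu mv nv f t z y u v)
                (fun z t => famg w my ny mu nu mv nv (dx f) t z y u v)).
  - intros z t. unfold famg. apply is_derive_scal. apply has_partials_dx; auto.
  - intros z t. apply famg_cont; auto; try cproj; apply continuous_const.
  - intros z t. apply famg_cont; auto; try apply continuous_id; apply continuous_const.
Qed.

Lemma RI_dy (x y u v : R) : cont4 (dy f) ->
  is_derive (fun z => RI (famg w my ny mu nu mv nv f) x z u v) y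
    (RI (famg (fun t => w t * my t) my ny mu nu mv nv (dy f)) x y u v).
Proof.
  intros Hd. unfold RI.
  apply (dparam (fun z t => famg w my ny mu nu mv nv f t x z u v)
                (fun z t => famg (fun t => w t * my t) my ny mu nu mv nv (dy f) t x z u v)).
  - intros z t. unfold famg.
    apply (is_derive_aff (fun s => f x s (mu t * u + nu t) (mv t * v + nv t))).
    apply has_partials_dy; auto.
  - intros z t. apply famg_cont; auto; try cproj; try apply continuous_const;
    try (intro; apply cmul; auto).
  - intros z t. apply famg_cont; auto; try apply continuous_id; try apply continuous_const;
    try (intro; apply cmul; auto).
Qed.

Lemma RI_dxi (x y u v : R) : cont4 (dxi f) ->
  is_derive (fun z => RI (famg w my ny mu nu mv nv f) x y z v) u
    (RI (famg (fun t => w t * mu t) my ny mu nu mv nv (dxi f)) x y u v).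
Proof.
  intros Hd. unfold RI.
  apply (dparam (fun z t => famg w my ny mu nu mv nv f t x y z v)
                (fun z t => famg (fun t => w t * mu t) my ny mu nu mv nv (dxi f) t x y z v)).
  - intros z t. unfold famg.
    apply (is_derive_aff (fun s => f x (my t * y + ny t) s (mv t * v + nv t))).
    apply has_partials_dxi; auto.
  - intros z t. apply famg_cont; auto; try cproj; try apply continuous_const;
    try (intro; apply cmul; auto).
  - intros z t. apply famg_cont; auto; try apply continuous_id; try apply continuous_const;
    try (intro; apply cmul; auto).
Qed.

Lemma RI_deta (x y u v : R) : cont4 (deta f) ->
  is_derive (fun z => RI (famg w my ny mu nu mv nv f) x y u z) v
    (RI (famg (fun t => w t * mv t) my ny mu nu mv nv (deta f)) x y u v).
Proof.
  intros Hd. unfold RI.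
  apply (dparam (fun z t => famg w my ny mu nu mv nv f t x y u z)
                (fun z t => famg (fun t => w t * mv t) my ny mu nu mv nv (deta f) t x y u z)).
  - intros z t. unfold famg.
    apply (is_derive_aff (fun s => f x (my t * y + ny t) (mu t * u + nu t) s)).
    apply has_partials_deta; auto.
  - intros z t. apply famg_cont; auto; try cproj; try apply continuous_const;
    try (intro; apply cmul; auto).
  - intros z t. apply famg_cont; auto; try apply continuous_id; try apply continuous_const;
    try (intro; apply cmul; auto).
Qed.
End FamDeriv.

Lemma smooth_parts f : smooth f -> cont4 f /\ has_partials f /\ smooth (dx f) /\
  smooth (dy f) /\ smooth (dxi f) /\ smooth (deta f).
Proof.
  intros H. split; [exact (H O)|]. split; [exact (proj1 (proj2 (H 1%nat)))|].
  repeat split; intro k; destruct (H (S k)) as [_ [_ [A [B [C D]]]]]; assumption.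
Qed.

Lemma RI_smooth_k k : forall f w my ny mu nu mv nv, smooth f ->
  ctn w -> ctn my -> ctn ny -> ctn mu -> ctn nu -> ctn mv -> ctn nv ->
  Ck k (RI (famg w my ny mu nu mv nv f)).
Proof.
  induction k; intros f w my ny mu nu mv nv Hs Hw Hmy Hny Hmu Hnu Hmv Hnv;
    destruct (smooth_parts f Hs) as [Hc [Hp [Sx [Sy [Su Sv]]]]].
  - simpl. apply int_cont. apply famg_G5; auto.
  - simpl. split; [apply int_cont; apply famg_G5; auto|].
    split.
    { intros x y u v. repeat split; eexists.
      apply RI_dx; auto. apply (Sx O).
      apply RI_dy; auto. apply (Sy O).
      apply RI_dxi; auto. apply (Su O).
      apply RI_deta; auto. apply (Sv O). }
    assert (ctm : forall a b, ctn a -> ctn b -> ctn (fun t => a t * b t)).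
    { intros a b Ha Hb t; apply cmul; auto. }
    repeat split.
    + replace (dx (RI (famg w my ny mu nu mv nv f))) with (RI (famg w my ny mu nu mv nv (dx f))).
      apply IHk; auto.
      unfold dx; repeat (apply functional_extensionality; intro); symmetry;
        apply is_derive_unique; apply RI_dx; auto; apply (Sx O).
    + replace (dy (RI (famg w my ny mu nu mv nv f))) with (RI (famg (fun t => w t * my t) my ny mu nu mv nv (dy f))).
      apply IHk; auto.
      unfold dy; repeat (apply functional_extensionality; intro); symmetry;
        apply is_derive_unique; apply RI_dy; auto; apply (Sy O).
    + replace (dxi (RI (famg w my ny mu nu mv nv f))) with (RI (famg (fun t => w t * mu t) my ny mu nu mv nv (dxi f))).
      apply IHk; auto.
      unfold dxi; repeat (apply functional_extensionality; intro); symmetry;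
        apply is_derive_unique; apply RI_dxi; auto; apply (Su O).
    + replace (deta (RI (famg w my ny mu nu mv nv f))) with (RI (famg (fun t => w t * mv t) my ny mu nu mv nv (deta f))).
      apply IHk; auto.
      unfold deta; repeat (apply functional_extensionality; intro); symmetry;
        apply is_derive_unique; apply RI_deta; auto; apply (Sv O).
Qed.

Lemma RI_smooth f w my ny mu nu mv nv : smooth f ->
  ctn w -> ctn my -> ctn ny -> ctn mu -> ctn nu -> ctn mv -> ctn nv ->
  smooth (RI (famg w my ny mu nu mv nv f)).
Proof. intros; intro k; apply RI_smooth_k; auto. Qed.

Lemma periodic_ext (phi : R -> R) :
  (forall x, phi (x + 2*PI) = phi x) ->
  (forall x, 0 <= x <= 2*PI -> phi x = phi 0) -> forall x, phi x = phi 0.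
Proof.
  intros Hp H0.
  assert (Q : forall n : nat, forall x, - (2*PI) * INR n <= x <= 2*PI * (INR n + 1) -> phi x = phi 0).
  { induction n; intros x Hx.
    - simpl in Hx. apply H0. lra.
    - rewrite S_INR in Hx.
      assert (HPI := PI_RGT_0).
      destruct (Rle_lt_dec x (2*PI*(INR n + 1))) as [H1|H1].
      + destruct (Rle_lt_dec (- (2*PI) * INR n) x) as [H2|H2].
        * apply IHn; lra.
        * rewrite <- Hp. apply IHn. split; [lra|].
          assert (0 <= INR n) by apply pos_INR. nra.
      + replace x with ((x - 2*PI) + 2*PI) by ring. rewrite Hp. apply IHn.
        assert (0 <= INR n) by apply pos_INR. split; nra. }
  intro x. assert (HPI := PI_RGT_0).
  assert (Ha : 0 <= Rabs x / (2*PI)). { apply Rmult_le_pos. apply Rabs_pos. left; apply Rinv_0_lt_compat; lra. }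
  destruct (nfloor_ex _ Ha) as [n Hn].
  apply (Q (S n)). rewrite S_INR.
  assert (Hx : Rabs x < 2*PI*(INR n + 1)).
  { destruct Hn as [_ Hn]. apply Rmult_lt_compat_l with (r := 2*PI) in Hn; [|lra].
    replace (2*PI*(Rabs x/(2*PI))) with (Rabs x) in Hn by (field; lra). exact Hn. }
  assert (0 <= INR n) by apply pos_INR.
  destruct (Rabs_def2 _ _ Hx). split; nra.
Qed.

Lemma poisson_xi f x y u v : poisson f xi_fun x y u v = - dx f x y u v.
Proof.
  unfold poisson, xi_fun, dx, dy, dxi, deta. rewrite !Derive_const, Derive_id. ring.
Qed.

Lemma isd_mull a x : is_derive (fun t => a * t) x a.
Proof. exact (isd_eq _ _ _ _ (is_derive_scal (fun t => t) x a 1 (is_derive_id x)) (Rmult_1_r a)). Qed.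
Lemma isd_mulr a x : is_derive (fun t => t * a) x a.
Proof. exact (is_derive_ext (fun t => a*t) (fun t => t*a) x a (fun t => Rmult_comm a t) (isd_mull a x)). Qed.

Lemma poisson_yeta f x y u v : poisson f yeta_fun x y u v = deta f x y u v * v - dy f x y u v * y.
Proof.
  unfold poisson, yeta_fun, dx, dy, dxi, deta. rewrite !Derive_const.
  replace (Derive (fun t : R => t * v) y) with v by (symmetry; apply is_derive_unique; apply isd_mulr).
  replace (Derive (fun t : R => y * t) v) with y by (symmetry; apply is_derive_unique; apply isd_mull).
  ring.
Qed.

Lemma loc_abs d v : Rabs v < d -> locally v (fun t => Rabs t < d).
Proof.
  intro H. assert (He : 0 < d - Rabs v) by lra.
  exists (mkposreal _ He). intros t Ht. change (Rabs (t - v) < d - Rabs v) in Ht.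
  assert (Rabs t <= Rabs (t - v) + Rabs v).
  { replace t with ((t - v) + v) at 1 by ring. apply Rabs_triang. }
  lra.
Qed.

Lemma loc_absc d c u : Rabs (u - c) < d -> locally u (fun t => Rabs (t - c) < d).
Proof.
  intro H. assert (He : 0 < d - Rabs (u - c)) by lra.
  exists (mkposreal _ He). intros t Ht. change (Rabs (t - u) < d - Rabs (u - c)) in Ht.
  assert (Rabs (t - c) <= Rabs (t - u) + Rabs (u - c)).
  { replace (t - c) with ((t - u) + (u - c)) by ring. apply Rabs_triang. }
  lra.
Qed.

Lemma ex_RInt_c (f : R -> R) : (forall t, continuous f t) -> ex_RInt f 0 1.
Proof. intros H. apply (@ex_RInt_continuous R_CompleteNormedModule). intros; apply H. Qed.

Lemma hadamard1 (F F' : R -> R) p q : (forall z, is_derive F z (F' z)) ->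
  (forall z, continuous F' z) -> p * RInt (fun t => F' (p*t+q)) 0 1 = F (p+q) - F q.
Proof.
  intros HD HC.
  assert (Hc2 : forall t, continuous (fun t => F' (p*t+q)) t).
  { intro t. apply (continuous_comp (fun t => p*t+q) F'). 
    apply cadd; [apply cmul; [apply continuous_const|apply continuous_id]|apply continuous_const].
    apply HC. }
  transitivity (RInt (fun t => p * F' (p*t+q)) 0 1).
  { symmetry. exact (RInt_scal _ 0 1 p (ex_RInt_c _ Hc2)). }
  transitivity (RInt (Derive (fun t => F (p*t+q))) 0 1).
  { apply RInt_ext. intros t _. symmetry. apply is_derive_unique.
    apply (is_derive_ext (fun z => 1 * F (p*z+q))). intro; apply Rmult_1_l.
    eapply isd_eq. apply is_derive_aff. apply HD. now rewrite Rmult_1_l. }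
  rewrite RInt_Derive.
  - rewrite Rmult_1_r, Rmult_0_r, Rplus_0_l. reflexivity.
  - intros t _. eexists. apply (is_derive_ext (fun z => 1 * F (p*z+q))). intro; apply Rmult_1_l.
    apply is_derive_aff. apply HD.
  - intros t _.
    assert (E : Derive (fun t => F (p*t+q)) = fun t => p * F' (p*t+q)).
    { apply functional_extensionality; intro z. apply is_derive_unique.
      apply (is_derive_ext (fun z => 1 * F (p*z+q))). intro; apply Rmult_1_l.
      eapply isd_eq. apply is_derive_aff. apply HD. now rewrite Rmult_1_l. }
    rewrite E. apply cmul. apply continuous_const. apply Hc2.
Qed.

Lemma RInt_mulr (f : R -> R) p : (forall t, continuous f t) ->
  RInt (fun t => f t * p) 0 1 = RInt f 0 1 * p.
Proof.
  intros Hf. transitivity (RInt (fun t => scal p (f t)) 0 1).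
  - apply RInt_ext; intros; apply Rmult_comm.
  - transitivity (scal p (RInt f 0 1)).
    + apply (RInt_scal f 0 1 p). apply ex_RInt_c; auto.
    + apply Rmult_comm.
Qed.

Lemma lin2 (f g : R -> R) p q : (forall t, continuous f t) -> (forall t, continuous g t) ->
  (forall t, 0 < t < 1 -> f t * p - g t * q = 0) -> RInt f 0 1 * p - RInt g 0 1 * q = 0.
Proof.
  intros Hf Hg H.
  transitivity (RInt (fun t => f t * p - g t * q) 0 1).
  - rewrite (RInt_minus (fun t => f t * p) (fun t => g t * q)).
    + rewrite (RInt_mulr f p Hf), (RInt_mulr g q Hg). reflexivity.
    + apply ex_RInt_c. intro; apply cmul; auto. apply continuous_const.
    + apply ex_RInt_c. intro; apply cmul; auto. apply continuous_const.
  - rewrite (RInt_ext _ (fun _ => 0)). rewrite RInt_const. change ((1 - 0) * 0 = 0). ring.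
    intros t Ht. rewrite Rmin_left, Rmax_right in Ht by lra. apply H; auto.
Qed.

Lemma lin3 (f g k : R -> R) p q : (forall t, continuous f t) -> (forall t, continuous g t) ->
  (forall t, continuous k t) ->
  (forall t, 0 < t < 1 -> f t * p - g t * q - k t = 0) ->
  RInt f 0 1 * p - RInt g 0 1 * q - RInt k 0 1 = 0.
Proof.
  intros Hf Hg Hk H.
  assert (E : RInt f 0 1 * p - RInt g 0 1 * q = RInt (fun t => f t * p - g t * q) 0 1).
  { rewrite (RInt_minus (fun t => f t * p) (fun t => g t * q)).
    + rewrite (RInt_mulr f p Hf), (RInt_mulr g q Hg). reflexivity.
    + apply ex_RInt_c. intro; apply cmul; auto. apply continuous_const.
    + apply ex_RInt_c. intro; apply cmul; auto. apply continuous_const. }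
  rewrite E.
  rewrite <- (RInt_minus (fun t => f t * p - g t * q) k).
  - rewrite (RInt_ext _ (fun _ => 0)). rewrite RInt_const. change ((1 - 0) * 0 = 0). ring.
    intros t Ht. rewrite Rmin_left, Rmax_right in Ht by lra. apply H; auto.
  - apply ex_RInt_c. intro. apply (continuous_minus (fun t => f t * p) (fun t => g t * q));
      apply cmul; auto; apply continuous_const.
  - apply ex_RInt_c; auto.
Qed.

Lemma deriv_zero (phi : R -> R) s0 D : locally s0 (fun s => phi s = 0) -> is_derive phi s0 D -> D = 0.
Proof.
  intros Hl HD. rewrite <- (is_derive_unique _ _ _ HD).
  rewrite (Derive_ext_loc phi (fun _ => 0)). apply Derive_const. exact Hl.
Qed.

Lemma isd_lin2 (f g : R -> R) s0 a b p q : is_derive f s0 a -> is_derive g s0 b ->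
  is_derive (fun s => f s * p - g s * q) s0 (a * p - b * q).
Proof.
  intros Hf Hg.
  apply (is_derive_ext (fun s => p * f s - q * g s)).
  intro t; change (p * f t - q * g t = f t * p - g t * q); ring.
  eapply isd_eq. apply (is_derive_minus (fun s => p * f s) (fun s => q * g s)).
  apply is_derive_scal; exact Hf. apply is_derive_scal; exact Hg.
  change (p * a - q * b = a * p - b * q). ring.
Qed.

Lemma zero_between (phi phi' : R -> R) v : (forall t, is_derive phi t (phi' t)) ->
  (forall t, Rmin 0 v < t < Rmax 0 v -> phi' t = 0) -> phi v = phi 0.
Proof.
  intros HD H0.
  destruct (MVT_gen phi 0 v (fun _ => 0)) as [c0 [_ Hc0]].
  - intros t Ht. eapply isd_eq. apply HD. apply H0. exact Ht.
  - intros t _. apply continuity_pt_filterlim.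
    exact (@ex_derive_continuous R_AbsRing R_NormedModule phi t (ex_intro _ _ (HD t))).
  - simpl in Hc0. lra.
Qed.

Lemma between_facts d v t : Rabs v < d -> Rmin 0 v < t < Rmax 0 v -> t <> 0 /\ Rabs t < d.
Proof.
  intros Hv Ht. destruct (Rabs_def2 _ _ Hv).
  unfold Rmin, Rmax in Ht. destruct (Rle_dec 0 v); split; try lra; apply Rabs_def1; lra.
Qed.

Lemma c2d_uv (F : F4) x y u v : cont4 F -> continuity_2d_pt (fun a b => F x y a b) u v.
Proof.
  intros H eps. destruct (H x y u v eps (cond_pos eps)) as [d [Hd H']].
  exists (mkposreal d Hd). intros a b Ha Hb. apply H'; simpl; auto;
  rewrite Rminus_eq_0, Rabs_R0; auto.
Qed.
Lemma c2d_yu (F : F4) x y u v : cont4 F -> continuity_2d_pt (fun a b => F x a b v) y u.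
Proof.
  intros H eps. destruct (H x y u v eps (cond_pos eps)) as [d [Hd H']].
  exists (mkposreal d Hd). intros a b Ha Hb. apply H'; simpl; auto;
  rewrite Rminus_eq_0, Rabs_R0; auto.
Qed.
Lemma c2d_yv (F : F4) x y u v : cont4 F -> continuity_2d_pt (fun a b => F x a u b) y v.
Proof.
  intros H eps. destruct (H x y u v eps (cond_pos eps)) as [d [Hd H']].
  exists (mkposreal d Hd). intros a b Ha Hb. apply H'; simpl; auto;
  rewrite Rminus_eq_0, Rabs_R0; auto.
Qed.

Lemma ex_dx f x y u v : has_partials f -> ex_derive (fun t => f t y u v) x.
Proof. intro H; destruct (H x y u v) as [A _]; exact A. Qed.
Lemma ex_dy f x y u v : has_partials f -> ex_derive (fun t => f x t u v) y.
Proof. intro H; destruct (H x y u v) as [_ [A _]]; exact A. Qed.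
Lemma ex_dxi f x y u v : has_partials f -> ex_derive (fun t => f x y t v) u.
Proof. intro H; destruct (H x y u v) as [_ [_ [A _]]]; exact A. Qed.
Lemma ex_deta f x y u v : has_partials f -> ex_derive (fun t => f x y u t) v.
Proof. intro H; destruct (H x y u v) as [_ [_ [_ A]]]; exact A. Qed.

Lemma smooth2 f : smooth f -> has_partials f /\ has_partials (dy f) /\ has_partials (dxi f) /\
  has_partials (deta f) /\ cont4 (dxi (deta f)) /\ cont4 (deta (dxi f)) /\
  cont4 (dy (dxi f)) /\ cont4 (dxi (dy f)) /\ cont4 (dy (deta f)) /\ cont4 (deta (dy f)).
Proof.
  intros H. destruct (H 2%nat) as [_ [Hp [_ [[_ [Hy [_ [Cyy [Cyu Cyv]]]]] [[_ [Hu [_ [Cuy [Cuu Cuv]]]]] [_ [Hv [_ [Cvy [Cvu Cvv]]]]]]]]]].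
  exact (conj Hp (conj Hy (conj Hu (conj Hv (conj Cvu (conj Cuv (conj Cuy (conj Cyu (conj Cvy Cyv))))))))).
Qed.

Lemma S_uv f x y u v : smooth f -> dxi (deta f) x y u v = deta (dxi f) x y u v.
Proof.
  intros H. destruct (smooth2 f H) as [Hp [Hpy [Hpu [Hpv [C1 [C2 _]]]]]].
  unfold dxi, deta.
  apply (Schwarz (fun a b => f x y a b) u v).
  - exists (mkposreal 1 Rlt_0_1). intros a b _ _.
    split; [apply ex_dxi; auto|]. split; [apply ex_deta; auto|].
    split; [apply (ex_dxi (deta f)); auto| apply (ex_deta (dxi f)); auto].
  - apply (c2d_uv (dxi (deta f))); auto.
  - apply (c2d_uv (deta (dxi f))); auto.
Qed.

Lemma S_yu f x y u v : smooth f -> dy (dxi f) x y u v = dxi (dy f) x y u v.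
Proof.
  intros H. destruct (smooth2 f H) as [Hp [Hpy [Hpu [Hpv [_ [_ [C1 [C2 _]]]]]]]].
  unfold dxi, dy.
  apply (Schwarz (fun a b => f x a b v) y u).
  - exists (mkposreal 1 Rlt_0_1). intros a b _ _.
    split; [apply ex_dy; auto|]. split; [apply ex_dxi; auto|].
    split; [apply (ex_dy (dxi f)); auto| apply (ex_dxi (dy f)); auto].
  - apply (c2d_yu (dy (dxi f))); auto.
  - apply (c2d_yu (dxi (dy f))); auto.
Qed.

Lemma S_yv f x y u v : smooth f -> dy (deta f) x y u v = deta (dy f) x y u v.
Proof.
  intros H. destruct (smooth2 f H) as [Hp [Hpy [Hpu [Hpv [_ [_ [_ [_ [C1 C2]]]]]]]]].
  unfold deta, dy.
  apply (Schwarz (fun a b => f x a u b) y v).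
  - exists (mkposreal 1 Rlt_0_1). intros a b _ _.
    split; [apply ex_dy; auto|]. split; [apply ex_deta; auto|].
    split; [apply (ex_dy (deta f)); auto| apply (ex_deta (dy f)); auto].
  - apply (c2d_yv (dy (deta f))); auto.
  - apply (c2d_yv (deta (dy f))); auto.
Qed.

Section Main.
Variables (s : sigma_case) (c : R) (K : F4) (U : R -> R -> R -> R -> Prop).
Hypotheses (HKs : smooth K) (HKi : sigma_invariant s K) (HK0 : forall x, K x 0 c 0 = 0)
 (HUo : open4 U) (HUg : forall x, U x 0 c 0)
 (HUp : forall x y u v, U x y u v -> poisson K xi_fun x y u v = 0 /\ poisson K yeta_fun x y u v = 0).

Lemma Kper x y u v : K (x + 2*PI) y u v = K x y u v.
Proof.
  destruct s; simpl in HKi.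
  - apply HKi.
  - replace (K (x+2*PI) y u v) with (K (x+PI+PI) (- - y) u (- - v))
      by (rewrite !Ropp_involutive; f_equal; ring).
    rewrite HKi. apply HKi.
Qed.

Lemma box : exists d, 0 < d /\ forall x y u v, 0 <= x <= 2*PI ->
  Rabs y < d -> Rabs (u-c) < d -> Rabs v < d -> U x y u v.
Proof.
  assert (Hd : forall t, exists d : posreal, forall x' y' u' v', Rabs (x' - t) < d ->
    Rabs (y' - 0) < d -> Rabs (u' - c) < d -> Rabs (v' - 0) < d -> U x' y' u' v').
  { intro t. destruct (HUo t 0 c 0 (HUg t)) as [d [Hd H]]. exists (mkposreal d Hd). exact H. }
  set (del := fun t => proj1_sig (constructive_indefinite_description _ (Hd t))).
  assert (Hdel : forall t x' y' u' v', Rabs (x' - t) < del t ->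
    Rabs (y' - 0) < del t -> Rabs (u' - c) < del t -> Rabs (v' - 0) < del t -> U x' y' u' v').
  { intro t. unfold del. destruct (constructive_indefinite_description _ (Hd t)); auto. }
  destruct (compactness_value_1d 0 (2*PI) del) as [d Hcomp].
  exists d; split; [apply cond_pos|].
  intros x y u v Hx Hy Hu Hv. apply NNPP; intro Hn. apply (Hcomp x Hx).
  intros [t0 [_ [H1 H2]]]. apply Hn. apply (Hdel t0); rewrite ?Rminus_0_r; lra.
Qed.

Lemma dxK_U x y u v : U x y u v -> dx K x y u v = 0.
Proof. intro H. destruct (HUp x y u v H) as [H1 _]. rewrite poisson_xi in H1. lra. Qed.

Lemma LK_U x y u v : U x y u v -> deta K x y u v * v - dy K x y u v * y = 0.
Proof. intro H. destruct (HUp x y u v H) as [_ H1]. rewrite poisson_yeta in H1. exact H1. Qed.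

Lemma Kparts : cont4 K /\ has_partials K /\ smooth (dx K) /\
  smooth (dy K) /\ smooth (dxi K) /\ smooth (deta K).
Proof. apply smooth_parts; auto. Qed.

Lemma xindep : exists d, 0 < d /\ (forall x y u v, 0 <= x <= 2*PI ->
  Rabs y < d -> Rabs (u-c) < d -> Rabs v < d -> U x y u v) /\
  forall x x' y u v, Rabs y < d -> Rabs (u - c) < d -> Rabs v < d -> K x' y u v = K x y u v.
Proof.
  destruct box as [d [Hd HB]]. exists d; split; auto; split; auto.
  destruct Kparts as [Hc [Hp _]].
  intros x x' y u v Hy Hu Hv.
  assert (E : forall z, K z y u v = K 0 y u v).
  { apply (periodic_ext (fun z => K z y u v)).
    - intro; apply Kper.
    - intros z Hz. destruct (Req_dec z 0) as [->|Hz0]; [reflexivity|].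
      destruct (MVT_gen (fun z => K z y u v) 0 z (fun _ => 0)) as [c0 [_ Hc0]].
      + rewrite Rmin_left, Rmax_right by lra. intros t Ht.
        eapply isd_eq. apply has_partials_dx; auto. apply dxK_U. apply HB; lra.
      + intros t _. apply continuity_pt_filterlim.
        exact (@ex_derive_continuous R_AbsRing R_NormedModule (fun z => K z y u v) t
          (ex_intro _ _ (has_partials_dx K t y u v Hp))).
      + simpl in Hc0. lra. }
  rewrite (E x), (E x'). reflexivity.
Qed.

End Main.

Definition one_f := fun _ : R => 1.
Definition zero_f := fun _ : R => 0.
Definition id_f := fun t : R => t.

Lemma ctn_const k : ctn (fun _ => k).
Proof. intro; apply continuous_const. Qed.
Lemma ctn_id : ctn id_f.
Proof. intro; apply continuous_id. Qed.
Lemma ctn_aff c : ctn (fun t => (1 - t) * c).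
Proof. intro t. apply cmul; [|apply continuous_const].
  apply (continuous_minus (fun _ => 1) (fun t => t)); [apply continuous_const|apply continuous_id]. Qed.
Lemma ctn_mul a b : ctn a -> ctn b -> ctn (fun t => a t * b t).
Proof. intros Ha Hb t; apply cmul; auto. Qed.

Lemma ctn_one : ctn one_f. Proof. apply ctn_const. Qed.
Lemma ctn_zero : ctn zero_f. Proof. apply ctn_const. Qed.
Lemma ctn_c c : ctn (fun _ : R => c). Proof. apply ctn_const. Qed.
Ltac ctns := first [ exact ctn_id | exact ctn_one | exact ctn_zero | exact (ctn_aff _) | exact (ctn_c _)
  | idtac ].

Section Deq.
Variables (w my ny mu nu mv nv : R -> R) (f : F4).
Hypotheses (Hw : ctn w) (Hmy : ctn my) (Hny : ctn ny) (Hmu : ctn mu) (Hnu : ctn nu)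
  (Hmv : ctn mv) (Hnv : ctn nv) (Hs : smooth f).

Lemma RI_dx_eq x y u v : dx (RI (famg w my ny mu nu mv nv f)) x y u v =
  RI (famg w my ny mu nu mv nv (dx f)) x y u v.
Proof.
  destruct (smooth_parts f Hs) as [Hc [Hp [Sx _]]].
  apply is_derive_unique. apply RI_dx; auto. apply (Sx O).
Qed.
Lemma RI_dy_eq x y u v : dy (RI (famg w my ny mu nu mv nv f)) x y u v =
  RI (famg (fun t => w t * my t) my ny mu nu mv nv (dy f)) x y u v.
Proof.
  destruct (smooth_parts f Hs) as [Hc [Hp [_ [Sy _]]]].
  apply is_derive_unique. apply RI_dy; auto. apply (Sy O).
Qed.
Lemma RI_dxi_eq x y u v : dxi (RI (famg w my ny mu nu mv nv f)) x y u v =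
  RI (famg (fun t => w t * mu t) my ny mu nu mv nv (dxi f)) x y u v.
Proof.
  destruct (smooth_parts f Hs) as [Hc [Hp [_ [_ [Su _]]]]].
  apply is_derive_unique. apply RI_dxi; auto. apply (Su O).
Qed.
Lemma RI_deta_eq x y u v : deta (RI (famg w my ny mu nu mv nv f)) x y u v =
  RI (famg (fun t => w t * mv t) my ny mu nu mv nv (deta f)) x y u v.
Proof.
  destruct (smooth_parts f Hs) as [Hc [Hp [_ [_ [_ Sv]]]]].
  apply is_derive_unique. apply RI_deta; auto. apply (Sv O).
Qed.
End Deq.

Ltac fin := match goal with |- ?a = ?b => change (@eq R a b) end; ring.

Section Funs.
Variables (c : R) (K : F4).
Hypothesis (HKs : smooth K).

Definition aF := RI (famg one_f one_f zero_f id_f (fun t => (1-t)*c) one_f zero_f (dxi K)).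
Definition hF := RI (famg one_f id_f zero_f zero_f (fun _ => c) one_f zero_f (dy K)).
Definition bF := RI (famg one_f one_f zero_f one_f zero_f id_f zero_f (deta hF)).

Lemma aF_smooth : smooth aF.
Proof. apply RI_smooth; ctns. apply smooth_parts; auto. Qed.
Lemma hF_smooth : smooth hF.
Proof. apply RI_smooth; ctns. apply smooth_parts; auto. Qed.
Lemma bF_smooth : smooth bF.
Proof. apply RI_smooth; ctns. apply smooth_parts; apply hF_smooth. Qed.

Lemma aE x y u v : aF x y u v = RInt (fun t => dxi K x y ((u-c)*t + c) v) 0 1.
Proof.
  unfold aF, RI, famg, one_f, zero_f, id_f. apply RInt_ext; intros t _.
  replace (1*y+0) with y by ring. replace (1*v+0) with v by ring.
  replace (t*u+(1-t)*c) with ((u-c)*t+c) by ring. fin.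
Qed.
Lemma a_deta x y u v : deta aF x y u v = RInt (fun t => deta (dxi K) x y ((u-c)*t + c) v) 0 1.
Proof.
  unfold aF. rewrite RI_deta_eq; ctns; [|apply smooth_parts; auto].
  unfold RI, famg, one_f, zero_f, id_f. apply RInt_ext; intros t _.
  replace (1*y+0) with y by ring. replace (1*v+0) with v by ring.
  replace (t*u+(1-t)*c) with ((u-c)*t+c) by ring. fin.
Qed.
Lemma a_dy x y u v : dy aF x y u v = RInt (fun t => dy (dxi K) x y ((u-c)*t + c) v) 0 1.
Proof.
  unfold aF. rewrite RI_dy_eq; ctns; [|apply smooth_parts; auto].
  unfold RI, famg, one_f, zero_f, id_f. apply RInt_ext; intros t _.
  replace (1*y+0) with y by ring. replace (1*v+0) with v by ring.
  replace (t*u+(1-t)*c) with ((u-c)*t+c) by ring. fin.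
Qed.

Lemma hE x y u v : hF x y u v = RInt (fun t => dy K x (y*t+0) c v) 0 1.
Proof.
  unfold hF, RI, famg, one_f, zero_f, id_f. apply RInt_ext; intros t _.
  replace (1*v+0) with v by ring. replace (0*u+c) with c by ring.
  replace (t*y+0) with (y*t+0) by ring. fin.
Qed.
Lemma h_deta x y u v : deta hF x y u v = RInt (fun t => deta (dy K) x (y*t) c v) 0 1.
Proof.
  unfold hF. rewrite RI_deta_eq; ctns; [|apply smooth_parts; auto].
  unfold RI, famg, one_f, zero_f, id_f. apply RInt_ext; intros t _.
  replace (1*v+0) with v by ring. replace (0*u+c) with c by ring.
  replace (t*y+0) with (y*t) by ring. fin.
Qed.
Lemma h_dy x y u v : dy hF x y u v = RInt (fun t => t * dy (dy K) x (y*t) c v) 0 1.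
Proof.
  unfold hF. rewrite RI_dy_eq; ctns; [|apply smooth_parts; auto].
  unfold RI, famg, one_f, zero_f, id_f. apply RInt_ext; intros t _.
  replace (1*v+0) with v by ring. replace (0*u+c) with c by ring.
  replace (t*y+0) with (y*t) by ring. fin.
Qed.

Lemma bE x y u v : bF x y u v = RInt (fun t => deta hF x y u (v*t+0)) 0 1.
Proof.
  unfold bF at 1. unfold RI, famg, one_f, zero_f, id_f. apply RInt_ext; intros t _.
  replace (1*y+0) with y by ring. replace (1*u+0) with u by ring.
  replace (t*v+0) with (v*t+0) by ring. fin.
Qed.
Lemma b_deta x y u v : deta bF x y u v = RInt (fun t => t * deta (deta hF) x y u (v*t)) 0 1.
Proof.
  unfold bF. rewrite RI_deta_eq; ctns; [|apply smooth_parts; apply hF_smooth].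
  unfold RI, famg, one_f, zero_f, id_f. apply RInt_ext; intros t _.
  replace (1*y+0) with y by ring. replace (1*u+0) with u by ring.
  replace (t*v+0) with (v*t) by ring. fin.
Qed.
Lemma b_dy x y u v : dy bF x y u v = RInt (fun t => dy (deta hF) x y u (v*t)) 0 1.
Proof.
  unfold bF. rewrite RI_dy_eq; ctns; [|apply smooth_parts; apply hF_smooth].
  unfold RI, famg, one_f, zero_f, id_f. apply RInt_ext; intros t _.
  replace (1*y+0) with y by ring. replace (1*u+0) with u by ring.
  replace (t*v+0) with (v*t) by ring. fin.
Qed.
End Funs.

Lemma sm_c4 f : smooth f -> cont4 f.
Proof. intro H; exact (H O). Qed.
Lemma sm_hp f : smooth f -> has_partials f.
Proof. intro H; exact (proj1 (proj2 (H 1%nat))). Qed.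
Lemma sm_dx f : smooth f -> smooth (dx f).
Proof. intro H. apply (smooth_parts f H). Qed.
Lemma sm_dy f : smooth f -> smooth (dy f).
Proof. intro H. apply (smooth_parts f H). Qed.
Lemma sm_dxi f : smooth f -> smooth (dxi f).
Proof. intro H. apply (smooth_parts f H). Qed.
Lemma sm_deta f : smooth f -> smooth (deta f).
Proof. intro H. apply (smooth_parts f H). Qed.

Ltac smt := repeat first [ assumption | apply sm_dx | apply sm_dy | apply sm_dxi | apply sm_deta ].
Ltac ctt := repeat first [ apply cmul | apply cadd | apply continuous_const | apply continuous_id ].

Lemma isd_prod_s (f g : R -> R) s0 a b p : is_derive f s0 a -> is_derive g s0 b ->
  is_derive (fun s => f s * p - g s * s) s0 (a * p - (b * s0 + g s0)).
Proof.
  intros Hf Hg.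
  assert (H := is_derive_minus _ _ s0 _ _ (is_derive_scal f s0 p a Hf)
     (is_derive_mult g (fun s => s) s0 b 1 Hg (is_derive_id s0) Rmult_comm)).
  apply (is_derive_ext (fun s => minus (p * f s) (mult (g s) s))).
  { intro t. change (p * f t - g t * t = f t * p - g t * t). ring. }
  refine (isd_eq _ _ _ _ H _).
  change (p * a - (b * s0 + g s0 * 1) = a * p - (b * s0 + g s0)). ring.
Qed.

Lemma isd3 (f g k : R -> R) s0 a b e q : is_derive f s0 a -> is_derive g s0 b -> is_derive k s0 e ->
  is_derive (fun s => f s * s - g s * q - k s) s0 (a * s0 + f s0 - b * q - e).
Proof.
  intros Hf Hg Hk.
  assert (H := is_derive_minus _ _ s0 _ _ (is_derive_minus _ _ s0 _ _
     (is_derive_mult f (fun s => s) s0 a 1 Hf (is_derive_id s0) Rmult_comm)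
     (is_derive_scal g s0 q b Hg)) Hk).
  apply (is_derive_ext (fun s => minus (minus (mult (f s) s) (q * g s)) (k s))).
  { intro t. change (f t * t - q * g t - k t = f t * t - g t * q - k t). ring. }
  refine (isd_eq _ _ _ _ H _).
  change (a * s0 + f s0 * 1 - q * b - e = a * s0 + f s0 - b * q - e). ring.
Qed.

Section Box.
Variables (c d : R) (K : F4).
Hypotheses (HKs : smooth K) (HK0 : forall x, K x 0 c 0 = 0) (Hd : 0 < d)
  (HL : forall x y u v, Rabs y < d -> Rabs (u - c) < d -> Rabs v < d ->
      deta K x y u v * v - dy K x y u v * y = 0)
  (HI : forall x x' y u v, Rabs y < d -> Rabs (u - c) < d -> Rabs v < d ->
      K x' y u v = K x y u v).

Lemma KdI x x' y u v : Rabs y < d -> Rabs (u - c) < d -> Rabs v < d ->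
  dy K x' y u v = dy K x y u v /\ dxi K x' y u v = dxi K x y u v /\ deta K x' y u v = deta K x y u v.
Proof.
  intros Hy Hu Hv. unfold dy, dxi, deta. split; [|split]; apply Derive_ext_loc.
  - generalize (loc_abs d y Hy). apply filter_imp. intros t Ht. apply HI; auto.
  - generalize (loc_absc d c u Hu). apply filter_imp. intros t Ht. apply HI; auto.
  - generalize (loc_abs d v Hv). apply filter_imp. intros t Ht. apply HI; auto.
Qed.

Lemma E3 x v : Rabs v < d -> K x 0 c v = 0.
Proof.
  intros Hv. transitivity (K x 0 c 0); [|apply HK0].
  apply (zero_between (fun z => K x 0 c z) (fun z => deta K x 0 c z)).
  - intro t. apply has_partials_deta. apply sm_hp; auto.
  - intros t Ht. destruct (between_facts d v t Hv Ht) as [Ht0 Htd].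
    assert (H := HL x 0 c t). rewrite Rabs_R0, Rminus_eq_0, Rabs_R0 in H.
    specialize (H Hd Hd Htd). rewrite Rmult_0_r, Rminus_0_r in H.
    destruct (Rmult_integral _ _ H); [assumption|contradiction].
Qed.

Lemma E4 x y : Rabs y < d -> K x y c 0 = 0.
Proof.
  intros Hy. transitivity (K x 0 c 0); [|apply HK0].
  apply (zero_between (fun z => K x z c 0) (fun z => dy K x z c 0)).
  - intro t. apply has_partials_dy. apply sm_hp; auto.
  - intros t Ht. destruct (between_facts d y t Hy Ht) as [Ht0 Htd].
    assert (H := HL x t c 0). rewrite Rabs_R0, Rminus_eq_0, Rabs_R0 in H.
    specialize (H Htd Hd Hd). rewrite Rmult_0_r, Rminus_0_l in H.
    apply Ropp_eq_0_compat in H. rewrite Ropp_involutive in H.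
    destruct (Rmult_integral _ _ H); [assumption|contradiction].
Qed.

Lemma E5 x y : Rabs y < d -> dy K x y c 0 = 0.
Proof.
  intros Hy. unfold dy. rewrite (Derive_ext_loc _ (fun _ => 0)). apply Derive_const.
  generalize (loc_abs d y Hy). apply filter_imp. intros t Ht. apply E4; auto.
Qed.

Lemma absmul_lt y t : Rabs y < d -> 0 < t < 1 -> Rabs (y * t) < d.
Proof.
  intros Hy Ht. rewrite Rabs_mult, (Rabs_right t) by lra.
  assert (0 <= Rabs y) by apply Rabs_pos. nra.
Qed.

Lemma E6 x y u : Rabs y < d -> hF c K x y u 0 = 0.
Proof.
  intros Hy. rewrite hE. rewrite (RInt_ext _ (fun _ => 0)).
  - rewrite RInt_const. change ((1 - 0) * 0 = 0). ring.
  - intros t Ht. rewrite Rmin_left, Rmax_right in Ht by lra.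
    rewrite Rplus_0_r. apply E5. apply absmul_lt; auto.
Qed.

Lemma decomp x y u v : Rabs y < d -> Rabs (u - c) < d -> Rabs v < d ->
  K x y u v = aF c K x y u v * (u - c) + bF c K x y u v * (y * v).
Proof.
  intros Hy Hu Hv.
  assert (D1 : (u - c) * aF c K x y u v = K x y (u - c + c) v - K x y c v).
  { rewrite aE. apply (hadamard1 (fun z => K x y z v) (fun z => dxi K x y z v)).
    - intro z. apply has_partials_dxi, sm_hp; auto.
    - intro z. apply ccomp4; [apply sm_c4; smt|..]; ctt. }
  assert (D2 : y * hF c K x y u v = K x (y + 0) c v - K x 0 c v).
  { rewrite hE. apply (hadamard1 (fun z => K x z c v) (fun z => dy K x z c v)).
    - intro z. apply has_partials_dy, sm_hp; auto.
    - intro z. apply ccomp4; [apply sm_c4; smt|..]; ctt. }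
  assert (D3 : v * bF c K x y u v = hF c K x y u (v + 0) - hF c K x y u 0).
  { rewrite bE. apply (hadamard1 (fun z => hF c K x y u z) (fun z => deta (hF c K) x y u z)).
    - intro z. apply has_partials_deta, sm_hp, hF_smooth; auto.
    - intro z. apply ccomp4; [apply sm_c4, sm_deta, hF_smooth; auto|..]; ctt. }
  rewrite Rplus_0_r in D2, D3. replace (u - c + c) with u in D1 by ring.
  rewrite E3 in D2 by auto. rewrite E6 in D3 by auto.
  replace (bF c K x y u v * (y * v)) with (y * (v * bF c K x y u v)) by ring.
  rewrite D3, Rminus_0_r, D2. lra.
Qed.

Lemma PA x y u v : Rabs y < d -> Rabs (u - c) < d -> Rabs v < d ->
  deta (dxi K) x y u v * v - dy (dxi K) x y u v * y = 0.
Proof.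
  intros Hy Hu Hv.
  rewrite <- (S_uv K) by auto. rewrite (S_yu K) by auto.
  apply (deriv_zero (fun s => deta K x y s v * v - dy K x y s v * y) u).
  - generalize (loc_absc d c u Hu). apply filter_imp. intros t Ht. apply HL; auto.
  - apply isd_lin2; apply has_partials_dxi; apply sm_hp; smt.
Qed.

Lemma PK x y v : Rabs y < d -> Rabs v < d ->
  deta (dy K) x y c v * v - dy (dy K) x y c v * y - dy K x y c v = 0.
Proof.
  intros Hy Hv.
  assert (Hc : Rabs (c - c) < d) by (rewrite Rminus_eq_0, Rabs_R0; auto).
  rewrite <- (S_yv K) by auto.
  replace (dy (deta K) x y c v * v - dy (dy K) x y c v * y - dy K x y c v) with
    (dy (deta K) x y c v * v - (dy (dy K) x y c v * y + dy K x y c v)) by ring.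
  apply (deriv_zero (fun s => deta K x s c v * v - dy K x s c v * s) y).
  - generalize (loc_abs d y Hy). apply filter_imp. intros t Ht. apply HL; auto.
  - apply (isd_prod_s (fun s => deta K x s c v) (fun s => dy K x s c v)); apply has_partials_dy; apply sm_hp; smt.
Qed.

Lemma PLh x y u v : Rabs y < d -> Rabs v < d ->
  deta (hF c K) x y u v * v - dy (hF c K) x y u v * y - hF c K x y u v = 0.
Proof.
  intros Hy Hv. rewrite h_deta, h_dy, hE by auto.
  apply lin3.
  - intro t. apply ccomp4; [apply sm_c4; smt|..]; ctt.
  - intro t. apply cmul; [apply continuous_id|]. apply ccomp4; [apply sm_c4; smt|..]; ctt.
  - intro t. apply ccomp4; [apply sm_c4; smt|..]; ctt.
  - intros t Ht. rewrite Rplus_0_r.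
    assert (H := PK x (y * t) v (absmul_lt y t Hy Ht) Hv).
    replace (t * dy (dy K) x (y * t) c v * y) with (dy (dy K) x (y * t) c v * (y * t)) by ring.
    exact H.
Qed.

Lemma PLb x y u v : Rabs y < d -> Rabs v < d ->
  deta (deta (hF c K)) x y u v * v - dy (deta (hF c K)) x y u v * y = 0.
Proof.
  intros Hy Hv.
  assert (Hh := hF_smooth c K HKs).
  rewrite (S_yv (hF c K)) by auto.
  assert (E : forall A B C : R, A * v - B * y = A * v + C - B * y - C) by (intros; ring).
  rewrite (E _ _ (deta (hF c K) x y u v)).
  apply (deriv_zero (fun s => deta (hF c K) x y u s * s - dy (hF c K) x y u s * y - hF c K x y u s) v).
  - generalize (loc_abs d v Hv). apply filter_imp. intros t Ht. apply PLh; auto.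
  - apply (isd3 (fun s => deta (hF c K) x y u s) (fun s => dy (hF c K) x y u s) (fun s => hF c K x y u s)); apply has_partials_deta; apply sm_hp; smt.
Qed.

Lemma a_xind x x' y u v : Rabs y < d -> Rabs (u - c) < d -> Rabs v < d ->
  aF c K x' y u v = aF c K x y u v.
Proof.
  intros Hy Hu Hv. rewrite !aE. apply RInt_ext. intros t Ht.
  rewrite Rmin_left, Rmax_right in Ht by lra.
  apply KdI; auto.
  replace ((u - c) * t + c - c) with ((u - c) * t) by ring. apply absmul_lt; auto.
Qed.

Lemma h_xind x x' y u v : Rabs y < d -> Rabs v < d ->
  hF c K x' y u v = hF c K x y u v.
Proof.
  intros Hy Hv. rewrite !hE. apply RInt_ext. intros t Ht.
  rewrite Rmin_left, Rmax_right in Ht by lra.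
  apply KdI; auto. rewrite Rplus_0_r. apply absmul_lt; auto.
  rewrite Rminus_eq_0, Rabs_R0; auto.
Qed.

Lemma b_xind x x' y u v : Rabs y < d -> Rabs v < d ->
  bF c K x' y u v = bF c K x y u v.
Proof.
  intros Hy Hv. rewrite !bE. apply RInt_ext. intros t Ht.
  rewrite Rmin_left, Rmax_right in Ht by lra.
  unfold deta. apply Derive_ext_loc.
  assert (Hvt : Rabs (v * t + 0) < d) by (rewrite Rplus_0_r; apply absmul_lt; auto).
  generalize (loc_abs d _ Hvt). apply filter_imp. intros s Hs. apply h_xind; auto.
Qed.

Lemma a_comm x y u v : Rabs y < d -> Rabs (u - c) < d -> Rabs v < d ->
  poisson (aF c K) xi_fun x y u v = 0 /\ poisson (aF c K) yeta_fun x y u v = 0.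
Proof.
  intros Hy Hu Hv. split.
  - rewrite poisson_xi. unfold dx.
    rewrite (Derive_ext (fun t => aF c K t y u v) (fun _ => aF c K x y u v)).
    rewrite Derive_const; ring. intro t; apply a_xind; auto.
  - rewrite poisson_yeta, a_deta, a_dy by auto.
    apply lin2.
    + intro t. apply ccomp4; [apply sm_c4; smt|..]; ctt.
    + intro t. apply ccomp4; [apply sm_c4; smt|..]; ctt.
    + intros t Ht. apply PA; auto.
      replace ((u - c) * t + c - c) with ((u - c) * t) by ring. apply absmul_lt; auto.
Qed.

Lemma b_comm x y u v : Rabs y < d -> Rabs (u - c) < d -> Rabs v < d ->
  poisson (bF c K) xi_fun x y u v = 0 /\ poisson (bF c K) yeta_fun x y u v = 0.
Proof.
  intros Hy Hu Hv. assert (Hh := hF_smooth c K HKs). split.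
  - rewrite poisson_xi. unfold dx.
    rewrite (Derive_ext (fun t => bF c K t y u v) (fun _ => bF c K x y u v)).
    rewrite Derive_const; ring. intro t; apply b_xind; auto.
  - rewrite poisson_yeta, b_deta, b_dy by auto.
    apply lin2.
    + intro t. apply cmul; [apply continuous_id|]. apply ccomp4; [apply sm_c4; smt|..]; ctt.
    + intro t. apply ccomp4; [apply sm_c4; smt|..]; ctt.
    + intros t Ht.
      replace (t * deta (deta (hF c K)) x y u (v * t) * v) with
        (deta (deta (hF c K)) x y u (v * t) * (v * t)) by ring.
      apply PLb; auto. apply absmul_lt; auto.
Qed.

End Box.

Lemma Derive_neg (f : R -> R) z : ex_derive f (-z) -> Derive (fun t => f (-t)) z = - Derive f (-z).
Proof.
  intros H. apply is_derive_unique.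
  assert (Ho : is_derive (fun t : R => - t) z (-1)).
  { exact (isd_eq _ _ _ _ (is_derive_opp (fun t => t) z 1 (is_derive_id z)) eq_refl). }
  refine (isd_eq _ _ _ _ (is_derive_comp f (fun t => -t) z _ _ (Derive_correct _ _ H) Ho) _).
  change (-1 * Derive f (-z) = - Derive f (-z)). ring.
Qed.

Section Inv.
Variables (s : sigma_case) (c : R) (K : F4).
Hypotheses (HKs : smooth K) (HKi : sigma_invariant s K).

Lemma inv_a : sigma_invariant s (aF c K).
Proof.
  destruct s; simpl in *; intros x y u v; rewrite !aE; apply RInt_ext; intros t _;
    unfold dxi; apply Derive_ext; intro z; apply HKi.
Qed.

Lemma dyR : s = Reverse -> forall x Y U V, dy K (x + PI) (-Y) U (-V) = - dy K x Y U V.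
Proof.
  intros Hs x Y U V. subst s. simpl in HKi. unfold dy.
  transitivity (Derive (fun t => K x (-t) U V) (-Y)).
  { apply Derive_ext. intro t. rewrite <- (HKi x (-t) U V), Ropp_involutive. reflexivity. }
  transitivity (- Derive (fun t => K x t U V) (- - Y)).
  { apply (Derive_neg (fun t => K x t U V)). rewrite Ropp_involutive. apply ex_dy, sm_hp; auto. }
  rewrite Ropp_involutive. reflexivity.
Qed.

Lemma hR : s = Reverse -> forall x y u v, hF c K (x + PI) (-y) u (-v) = - hF c K x y u v.
Proof.
  intros Hs x y u v. rewrite !hE.
  rewrite (RInt_ext _ (fun t => dy K x (y * t + 0) c v * (-1))).
  - rewrite RInt_mulr. ring.
    intro t. apply ccomp4; [apply sm_c4; smt|..]; ctt.
  - intros t _. replace (- y * t + 0) with (- (y * t + 0)) by ring.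
    rewrite dyR by auto. fin.
Qed.

Lemma inv_b : sigma_invariant s (bF c K).
Proof.
  assert (Hh := hF_smooth c K HKs). assert (HR := hR).
  destruct s eqn:Hs; simpl in *; intros x y u v; rewrite !bE; apply RInt_ext; intros t _.
  - unfold deta; apply Derive_ext; intro z. rewrite !hE. apply RInt_ext; intros t' _.
    unfold dy; apply Derive_ext; intro z'; apply HKi.
  - replace (- v * t + 0) with (- (v * t + 0)) by ring.
    unfold deta.
    transitivity (Derive (fun z => - hF c K x y u (-z)) (- (v * t + 0))).
    { apply Derive_ext. intro z. rewrite <- (Ropp_involutive z) at 1. apply HR; auto. }
    transitivity (- Derive (fun z => hF c K x y u (-z)) (- (v * t + 0))).
    { apply Derive_opp. }
    transitivity (- - Derive (fun z => hF c K x y u z) (- - (v * t + 0))).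
    { f_equal. apply (Derive_neg (fun z => hF c K x y u z)).
      rewrite Ropp_involutive. apply ex_deta, sm_hp; auto. }
    rewrite !Ropp_involutive. reflexivity.
Qed.
End Inv.

Lemma open_box c d : open4 (fun _ y u v => Rabs y < d /\ Rabs (u - c) < d /\ Rabs v < d).
Proof.
  intros x y u v [Hy [Hu Hv]].
  exists (Rmin (d - Rabs y) (Rmin (d - Rabs (u - c)) (d - Rabs v))).
  split.
  - repeat apply Rmin_pos; lra.
  - intros x' y' u' v' _ H2 H3 H4.
    assert (A := Rmin_l (d - Rabs y) (Rmin (d - Rabs (u - c)) (d - Rabs v))).
    assert (B := Rmin_r (d - Rabs y) (Rmin (d - Rabs (u - c)) (d - Rabs v))).
    assert (B1 := Rmin_l (d - Rabs (u - c)) (d - Rabs v)).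
    assert (B2 := Rmin_r (d - Rabs (u - c)) (d - Rabs v)).
    assert (T1 : Rabs y' <= Rabs (y' - y) + Rabs y).
    { replace y' with ((y' - y) + y) at 1 by ring. apply Rabs_triang. }
    assert (T2 : Rabs (u' - c) <= Rabs (u' - u) + Rabs (u - c)).
    { replace (u' - c) with ((u' - u) + (u - c)) by ring. apply Rabs_triang. }
    assert (T3 : Rabs v' <= Rabs (v' - v) + Rabs v).
    { replace v' with ((v' - v) + v) at 1 by ring. apply Rabs_triang. }
    repeat split; lra.
Qed.

Theorem lemma2p2 (s : sigma_case) (c : R) (K : F4) :
  Ccl s c K ->
  (forall x, K x 0 c 0 = 0) ->
  (exists d, 0 < d /\ forall x x' y u v,
      Rabs y < d -> Rabs (u - c) < d -> Rabs v < d ->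
      K x' y u v = K x y u v) /\
  exists a b : F4, Ccl s c a /\ Ccl s c b /\
    near_gamma c (fun x y u v =>
      K x y u v = a x y u v * (u - c) + b x y u v * (y * v)).
Proof.
  intros [[HKs HKi] [U [HUo [HUg HUp]]]] HK0.
  destruct (xindep s c K U HKs HKi HUo HUg HUp) as [d [Hd [HB HI]]].
  assert (HPI := PI_RGT_0).
  assert (HL : forall x y u v, Rabs y < d -> Rabs (u - c) < d -> Rabs v < d ->
      deta K x y u v * v - dy K x y u v * y = 0).
  { intros x y u v Hy Hu Hv.
    destruct (KdI c d K HI 0 x y u v Hy Hu Hv) as [E1 [_ E3]].
    rewrite E1, E3. apply (LK_U K U HUp). apply HB; auto. lra. }
  assert (Hbox : forall x : R, Rabs 0 < d /\ Rabs (c - c) < d /\ Rabs 0 < d).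
  { intro. rewrite Rminus_eq_0, Rabs_R0. auto. }
  split; [exists d; split; auto|].
  exists (aF c K), (bF c K). split; [|split].
  - split; [split; [apply aF_smooth; auto|apply inv_a; auto]|].
    exists (fun _ y u v => Rabs y < d /\ Rabs (u - c) < d /\ Rabs v < d).
    split; [apply open_box|]. split; [exact Hbox|].
    intros x y u v [Hy [Hu Hv]]. apply (a_comm c d K HKs HL HI); auto.
  - split; [split; [apply bF_smooth; auto|apply inv_b; auto]|].
    exists (fun _ y u v => Rabs y < d /\ Rabs (u - c) < d /\ Rabs v < d).
    split; [apply open_box|]. split; [exact Hbox|].
    intros x y u v [Hy [Hu Hv]]. apply (b_comm c d K HKs Hd HL HI); auto.
  - exists (fun _ y u v => Rabs y < d /\ Rabs (u - c) < d /\ Rabs v < d).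
    split; [apply open_box|]. split; [exact Hbox|].
    intros x y u v [Hy [Hu Hv]]. apply (decomp c d K HKs HK0 Hd HL); auto.
Qed.
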